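(* Assume $v_\circ<v_\bullet$ and fix $v<v_\bullet$. For every $k'\in\mathbb N$ there exist $k_2\ge k'$ and $\rho_0\ge1$ (large enough) such that $p_{k_2}<e^{-\log^{3/2}L_{k_2}}$.
   Context: Fix $q\in(0,1)$, $p_\circ,p_\bullet\in[0,1]$, $v_\circ=2p_\circ-1$, $v_\bullet=2p_\bullet-1$. Under $\mathbb P^\rho$: $\omega$ is a Poisson point process of intensity $\rho\sum_xP_x$ on two-sided paths $w:\mathbb Z\to\mathbb Z$, where $P_x$ is the law of a two-sided lazy simple random walk (steps $-1,0,1$ with probabilities $\frac{1-q}2,q,\frac{1-q}2$) with $w(0)=x$; independently $(U_y)_{y\in\mathbb Z^2}$ are i.i.d. uniform $[0,1]$. $\mathcal T=\{(w(n),n): w\in\omega, n\in\mathbb Z\}$. For $y\in\mathbb Z^2$, $Y^y_0=y$ and $Y^y_{i+1}=Y^y_i+(1,1)$ if ($Y^y_i\in\mathcal T$, $U_{Y^y_i}\le p_\bullet$) or ($Y^y_i\notin\mathcal T$, $U_{Y^y_i}\le p_\circ$), else $Y^y_{i+1}=Y^y_i+(-1,1)$; $X^y$ is the spatial coordinate of $Y^y$. Scales: $L_0=100$, $L_{k+1}=\lfloor L_k^{1/2}\rfloor L_k$. $I_L=([0,L]\times\{0\})\cap\mathbb Z^2$, $I_L(m)=(rL,sL)+I_L$ for $m=(r,s)$. Velocities: $\delta=\frac12(v_\bullet-v)$, $v_1=v_\bullet-\delta$, $v_{k+1}=v_k-\delta\frac{6}{\pi^2}\frac1{k^2}$. Bad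 events: $A_k(m)=\{\exists (x,n)\in I_{L_k}(m): X^{(x,n)}_{L_k}-x<v_kL_k\}$. Densities: $\rho_0>0$ given, $\rho_{k+1}=(1+L_k^{-1/16})\rho_k$. $p_k=\mathbb P^{\rho_k}(A_k(0))$. *)

(* Defs.v *)
From HB Require Import structures.
From mathcomp Require Import all_boot all_order all_algebra.
From mathcomp Require Import all_classical all_reals all_analysis.
From Stdlib Require Import PeanoNat.
Set Implicit Arguments. Unset Strict Implicit. Unset Printing Implicit Defensive.
Import Order.TTheory GRing.Theory Num.Theory.
Local Open Scope classical_set_scope.
Local Open Scope ring_scope.

Fixpoint Lscale (k : nat) : nat :=
  match k with
  | 0 => 100
  | k'.+1 => (Nat.sqrt (Lscale k') * Lscale k')%N
  end.

Section Params.
Variable R : realType.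

Definition delta (vb v : R) : R := (vb - v) / 2.

(* v_1 = v_bullet - delta, v_{k+1} = v_k - delta * 6/pi^2 * 1/k^2  (k >= 1).
   v_0 is not defined in the paper; we set v_0 := v_bullet (never used since
   the statement requires k2 >= 1). *)
Fixpoint vel (vb v : R) (k : nat) : R :=
  match k with
  | 0 => vb
  | 1 => vb - delta vb v
  | (k'.+1 as k1).+1 => vel vb v k1 - delta vb v * (6 / pi ^+ 2) / (k1%:R ^+ 2)
  end.

Fixpoint rho_seq (rho0 : R) (k : nat) : R :=
  match k with
  | 0 => rho0
  | k'.+1 => (1 + powR (Lscale k')%:R (- (1/16))) * rho_seq rho0 k'
  end.

(* Position at time n of a two-sided path with w(0) = x and increments
   w(m+1) - w(m) = xi m. *)
Definition walkpos (xi : int -> int) (x : int) (n : int) : int :=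
  match n with
  | Posz k => x + \sum_(i < k) xi (Posz i)
  | Negz k => x - \sum_(i < k.+1) xi (Negz i)
  end.

Section Model.
Context {d : measure_display} {Omega : measurableType d}.

(* Random objects:
   N x        = number of Poisson paths w with w(0) = x,
   xi x j m   = increment at time m (w(m+1)-w(m)) of the j-th such path,
   U y        = the uniform variable attached to y in Z^2. *)
Variables (N : int -> Omega -> nat) (xi : int -> nat -> int -> Omega -> int)
          (U : int * int -> Omega -> R).

(* Index set of the elementary random variables. *)
Definition src : Type := ((int + (int * nat * int)) + (int * int))%type.

(* Generating pi-systems of events for each elementary random variable. *)
Definition gen_events (i : src) : set (set Omega) :=
  match i with
  | inl (inl x) => [set E | exists n : nat, E = [set w | N x w = n]]
  | inl (inr (x, j, m)) => [set E | exists s : int, E = [set w | xi x j m w = s]]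
  | inr y => [set E | exists t : R, E = [set w | U y w <= t]]
  end.

Definition inT (w : Omega) (y : int * int) : Prop :=
  exists (x : int) (j : nat), (j < N x w)%N /\ walkpos (fun m => xi x j m w) x y.2 = y.1.

Definition stepRight (pc pb : R) (w : Omega) (z : int * int) : bool :=
  (`[< inT w z >] && (U z w <= pb)) || (~~ `[< inT w z >] && (U z w <= pc)).

Fixpoint Ywalk (pc pb : R) (w : Omega) (y : int * int) (i : nat) : int * int :=
  match i with
  | 0 => y
  | i'.+1 => let z := Ywalk pc pb w y i' in
             if stepRight pc pb w z then (z.1 + 1, z.2 + 1)%R else (z.1 - 1, z.2 + 1)%R
  end.

Definition Abad (pc pb vb v : R) (k : nat) : set Omega :=
  [set w | exists x : nat, (x <= Lscale k)%N /\
     ((Ywalk pc pb w (x%:Z, 0%:Z) (Lscale k)).1 - x%:Z)%:~R < vel vb v k * (Lscale k)%:R].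

(* (Omega, P, N, xi, U) realizes the law P^rho: the Poisson point process of
   intensity rho * sum_x P_x on two-sided lazy random walk paths (given as the
   superposition over x of Poisson(rho) many independent paths started at x),
   together with independent i.i.d. uniform [0,1] variables U. *)
Definition PPP_model (P : probability Omega R) (q rho : R) : Prop :=
  [/\ (forall i E, gen_events i E -> measurable E),
      (forall (x : int) (n : nat),
          P [set w | N x w = n] = (expR (- rho) * rho ^+ n / (n`!)%:R)%:E),
      (forall x j m, [/\ P [set w | xi x j m w = 1] = ((1 - q) / 2)%:E,
                         P [set w | xi x j m w = 0] = q%:E &
                         P [set w | xi x j m w = -1] = ((1 - q) / 2)%:E]),
      (forall y (t : R), 0 <= t <= 1 -> P [set w | U y w <= t] = t%:E) &
      (forall (J : seq src) (E : src -> set Omega), uniq J ->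
          (forall i, i \in J -> gen_events i (E i)) ->
          P (\bigcap_(i in [set` J]) E i) = (\prod_(i <- J) P (E i))%E)].

End Model.
End Params.

(* Main.v *)
Require Import Defs.
From HB Require Import structures.
From mathcomp Require Import all_boot all_order all_algebra.
From mathcomp Require Import all_classical all_reals all_analysis.
From mathcomp Require Import ring lra zify.
From Stdlib Require Import PeanoNat.
Set Implicit Arguments. Unset Strict Implicit. Unset Printing Implicit Defensive.
Import Order.TTheory GRing.Theory Num.Theory.
Local Open Scope classical_set_scope.
Local Open Scope ring_scope.


Section Prob.
Variable R : realType.
Context {d : measure_display} {Omega : measurableType d}.
Variable P : probability Omega R.

Definition pr (A : set Omega) : R := fine (P A).

Lemma P_fin A : measurable A -> P A \is a fin_num.
Proof.
move=> mA; rewrite ge0_fin_numE ?measure_ge0//.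
by rewrite (le_lt_trans (probability_le1 P mA)) ?ltry.
Qed.

Lemma prE A : measurable A -> P A = (pr A)%:E.
Proof. by move=> mA; rewrite /pr fineK ?P_fin. Qed.

Lemma pr_ge0 A : 0 <= pr A.
Proof. exact/fine_ge0/measure_ge0. Qed.

Lemma pr_le1 A : measurable A -> pr A <= 1.
Proof. by move=> mA; have := probability_le1 P mA; rewrite prE// lee_fin. Qed.

Lemma pr_le A B : measurable A -> measurable B -> A `<=` B -> pr A <= pr B.
Proof.
move=> mA mB AB; have := le_measure P (mem_set mA) (mem_set mB) AB; rewrite /=.
by rewrite (prE mA) (prE mB) lee_fin.
Qed.

Lemma pr_U A B : measurable A -> measurable B -> pr (A `|` B) <= pr A + pr B.
Proof.
move=> mA mB; have := measureU2 P mA mB; rewrite /=.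
by rewrite (prE mA) (prE mB) prE ?lee_fin//; exact: measurableU.
Qed.

Lemma pr_D A B : measurable A -> measurable B -> B `<=` A ->
  pr (A `\` B) = pr A - pr B.
Proof.
move=> mA mB BA; have := @measureD _ _ _ P _ _ mA mB; rewrite /=.
rewrite (setIidr BA) (prE mA) (prE mB) prE; last exact: measurableD.
by move=> /(_ (ltry _)) [].
Qed.

Lemma pr_bigU I (r : seq I) (Pp : pred I) (F : I -> set Omega) :
  (forall i, Pp i -> measurable (F i)) ->
  pr (\big[setU/set0]_(i <- r | Pp i) F i) <= \sum_(i <- r | Pp i) pr (F i).
Proof.
move=> mF; elim: r => [|i r IH]; first by rewrite !big_nil /pr measure0.
rewrite !big_cons; case: ifP => Pi //.
apply: le_trans (pr_U _ _) _; first exact: mF.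
  exact: bigsetU_measurable.
by rewrite lerD2l.
Qed.

End Prob.


Section Indep.
Variable R : realType.
Context {d : measure_display} {Omega : measurableType d}.
Variable P : probability Omega R.
Variables (N : int -> Omega -> nat) (xi : int -> nat -> int -> Omega -> int)
          (U : int * int -> Omega -> R).
Variables (q rho : R).
Hypothesis HM : PPP_model N xi U P q rho.
Variable E : src -> set Omega.
Hypothesis HE : forall i, gen_events N xi U i (E i).

Definition cyl (J : seq src) := \big[setI/setT]_(i <- J) E i.

Lemma E_meas i : measurable (E i).
Proof. by case: HM => Hm _ _ _ _; exact: Hm (HE i). Qed.

Lemma cyl_meas J : measurable (cyl J).
Proof. by apply: bigsetI_measurable => i _; exact: E_meas. Qed.

Lemma cyl_cat J1 J2 : cyl (J1 ++ J2) = cyl J1 `&` cyl J2.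
Proof.
by rewrite /cyl big_cat.
Qed.

Lemma bigcap_seqE J : \bigcap_(i in [set` J]) E i = cyl J.
Proof.
elim: J => [|i J IH].
  by rewrite /cyl big_nil; apply/seteqP; split => w //= _ j.
rewrite /cyl big_cons -/(cyl J) -IH; apply/seteqP; split => w /=.
  move=> H; split; first by apply: H; rewrite /= inE eqxx.
  by move=> j Jj; apply: H; rewrite /= inE Jj orbT.
by move=> [Ei H] j; rewrite /= inE => /orP [/eqP ->|/H].
Qed.

Lemma cylP J : uniq J -> pr P (cyl J) = \prod_(i <- J) pr P (E i).
Proof.
move=> uJ; case: HM => _ _ _ _ Hind.
have H := Hind J E uJ (fun i _ => HE i).
rewrite bigcap_seqE (prE P (cyl_meas J)) in H.
rewrite (eq_bigr (fun i => (pr P (E i))%:E)) ?prodEFin in H; last first.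
  by move=> i _; rewrite -(prE P (E_meas i)).
by case: H.
Qed.

Lemma blocks (Bs : seq (seq src * bool)) (Y : seq src) :
  uniq (Y ++ flatten (map fst Bs)) ->
  pr P (cyl Y `&` \big[setI/setT]_(b <- Bs) (if b.2 then cyl b.1 else ~` cyl b.1))
  = pr P (cyl Y) * \prod_(b <- Bs) (if b.2 then pr P (cyl b.1) else 1 - pr P (cyl b.1)).
Proof.
elim: Bs Y => [|[B s] Bs IH] Y.
  by rewrite !big_nil setIT mulr1.
rewrite /= => uY.
have uYB : uniq ((Y ++ B) ++ flatten (map fst Bs)) by rewrite -catA.
have uY' : uniq (Y ++ flatten (map fst Bs)).
  apply: subseq_uniq uY; apply: cat_subseq (subseq_refl Y) _; exact: suffix_subseq.
have uYB0 : uniq (Y ++ B) by move: uYB; rewrite cat_uniq => /andP[].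
have uY0 : uniq Y by move: uYB0; rewrite cat_uniq => /andP[].
have uB0 : uniq B by move: uYB0; rewrite cat_uniq => /and3P[].
have pYB : pr P (cyl (Y ++ B)) = pr P (cyl Y) * pr P (cyl B).
  by rewrite !cylP // big_cat.
rewrite !big_cons /=.
set rest := \big[setI/setT]_(b <- Bs) _.
have mrest : measurable rest.
  apply: bigsetI_measurable => -[b []] _ /=; first exact: cyl_meas.
  exact/measurableC/cyl_meas.
case: s.
  by rewrite setIA -cyl_cat IH // pYB mulrA.
have -> : cyl Y `&` (~` cyl B `&` rest) = (cyl Y `&` rest) `\` (cyl (Y ++ B) `&` rest).
  rewrite cyl_cat; apply/seteqP; split => w /=.
    by move=> [Yw [nB Rw]]; split => // -[[_ ?] _].
  by move=> [[Yw Rw] H]; split => //; split => // Bw; apply: H.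
rewrite pr_D; first last.
- by rewrite cyl_cat => w [[? ?] ?].
- exact/measurableI/mrest/cyl_meas.
- exact/measurableI/mrest/cyl_meas.
by rewrite IH // IH // pYB; ring.
Qed.

End Indep.


Section Meas.
Variable R : realType.
Context {d : measure_display} {Omega : measurableType d}.
Variables (N : int -> Omega -> nat) (xi : int -> nat -> int -> Omega -> int)
          (U : int * int -> Omega -> R).
Hypothesis Hm : forall i E, gen_events N xi U i E -> measurable E.

Lemma meas_const (Pp : Prop) : measurable [set _ : Omega | Pp].
Proof.
case: (pselect Pp) => H.
  by rewrite (_ : [set _ | Pp] = setT) //; apply/seteqP; split.
by rewrite (_ : [set _ | Pp] = set0) //; apply/seteqP; split.
Qed.

Lemma meas_N x n : measurable [set w | N x w = n].
Proof. by apply: (Hm (i := inl (inl x))); exists n. Qed.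

Lemma meas_xi x j m s : measurable [set w | xi x j m w = s].
Proof. by apply: (Hm (i := inl (inr (x, j, m)))); exists s. Qed.

Lemma meas_U y t : measurable [set w | U y w <= t].
Proof. by apply: (Hm (i := inr y)); exists t. Qed.

Lemma sum_level (f : nat -> Omega -> int) :
  (forall i s, measurable [set w | f i w = s]) ->
  forall k c, measurable [set w | \sum_(i < k) f i w = c].
Proof.
move=> Hf; elim => [|k IH] c.
  under eq_set do rewrite big_ord0. exact: meas_const.
have -> : [set w | \sum_(i < k.+1) f i w = c] =
  \bigcup_(s : int) ([set w | \sum_(i < k) f i w = c - s] `&` [set w | f k w = s]).
  apply/seteqP; split => w /=.
    by rewrite big_ord_recr /= => <-; exists (f k w) => //=; split => //; rewrite addrK.
  by move=> [s _ [H1 H2]]; rewrite big_ord_recr /= H1 H2 subrK.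
apply: countable_bigcupT_measurable; first exact: countableP.
by move=> s; apply: measurableI; [exact: IH | exact: Hf].
Qed.

Lemma walk_level x j a n c :
  measurable [set w | walkpos (fun m => xi x j m w) a n = c].
Proof.
case: n => k /=.
  have -> : [set w | a + \sum_(i < k) xi x j (Posz i) w = c] =
    [set w | \sum_(i < k) xi x j (Posz i) w = c - a].
    by apply/seteqP; split => w /=; [move=> <-; rewrite addrC addKr| move=> ->; rewrite addrC subrK].
  by apply: (sum_level (f := fun i w => xi x j (Posz i) w)) => i s; exact: meas_xi.
have -> : [set w | a - \sum_(i < k.+1) xi x j (Negz i) w = c] =
  [set w | \sum_(i < k.+1) xi x j (Negz i) w = a - c].
  apply/seteqP; split => w /=; [move=> <-; rewrite opprB addrC subrK //| move=> ->].
  by rewrite opprB addrC subrK.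
by apply: (sum_level (f := fun i w => xi x j (Negz i) w)) => i s; exact: meas_xi.
Qed.

Lemma meas_Nlt x j : measurable [set w | (j < N x w)%N].
Proof.
have -> : [set w | (j < N x w)%N] = ~` \bigcup_(n in `I_j.+1) [set w | N x w = n].
  apply/seteqP; split => w /=.
    move=> H [n /= Hn Hw]; move: Hn H; rewrite -Hw.
    by rewrite ltnS => /leq_gtF ->.
  case: ltnP => // H Hn; exfalso; apply: Hn.
  by exists (N x w) => //=; rewrite /= ltnS.
by apply/measurableC/bigcup_measurable => n _; exact: meas_N.
Qed.

Lemma inT_meas y : measurable [set w | inT N xi w y].
Proof.
have -> : [set w | inT N xi w y] = \bigcup_(p : int * nat)
  ([set w | (p.2 < N p.1 w)%N] `&` [set w | walkpos (fun m => xi p.1 p.2 m w) p.1 y.2 = y.1]).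
  apply/seteqP; split => w /=.
    by move=> [x [j [H1 H2]]]; exists (x, j).
  by move=> [[x j] _ /= [H1 H2]]; exists x, j.
apply: countable_bigcupT_measurable; first exact: countableP.
by move=> p; apply: measurableI; [exact: meas_Nlt | exact: walk_level].
Qed.

Lemma step_meas pc pb z : measurable [set w | stepRight N xi U pc pb w z].
Proof.
have -> : [set w | stepRight N xi U pc pb w z] =
  ([set w | inT N xi w z] `&` [set w | U z w <= pb]) `|`
  (~` [set w | inT N xi w z] `&` [set w | U z w <= pc]).
  apply/seteqP; split => w /=; rewrite /stepRight.
    by case: (asboolP (inT N xi w z)) => H /=; rewrite ?andbF ?orbF ?andbT => ->;
      [left|right].
  by case: (asboolP (inT N xi w z)) => H /= [[H1 H2]|[H1 H2]] //; rewrite H2 ?orbT.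
apply: measurableU; apply: measurableI; try exact: meas_U.
  exact: inT_meas.
exact/measurableC/inT_meas.
Qed.

Lemma meas_if (b : Omega -> bool) (u v p : int * int) :
  measurable [set w | b w] -> measurable [set w | (if b w then u else v) = p].
Proof.
move=> mb; have -> : [set w | (if b w then u else v) = p] =
  ([set w | b w] `&` [set _ | u = p]) `|` (~` [set w | b w] `&` [set _ | v = p]).
  apply/seteqP; split => w /=; case: (b w) => /=.
  - by left.
  - by right.
  - by move=> [[_ ->]|[H _]] //; exfalso; exact: H.
  - by move=> [[H _]|[_ ->]].
apply: measurableU; apply: measurableI; try exact: meas_const.
  exact: mb.
exact: measurableC.
Qed.

Lemma Y_level pc pb y i p : measurable [set w | Ywalk N xi U pc pb w y i = p].
Proof.
elim: i p => [|i IH] p /=; first exact: meas_const.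
have -> : [set w | (let z := Ywalk N xi U pc pb w y i in
    if stepRight N xi U pc pb w z then (z.1 + 1, z.2 + 1) else (z.1 - 1, z.2 + 1)) = p]
  = \bigcup_(z : int * int) ([set w | Ywalk N xi U pc pb w y i = z] `&`
      [set w | (if stepRight N xi U pc pb w z then (z.1 + 1, z.2 + 1) else (z.1 - 1, z.2 + 1)) = p]).
  apply/seteqP; split => w /=.
    by move=> H; exists (Ywalk N xi U pc pb w y i).
  by move=> [z _ /= [-> H]].
apply: countable_bigcupT_measurable; first exact: countableP.
move=> z; apply: measurableI; first exact: IH.
by apply: meas_if; exact: step_meas.
Qed.

Lemma Abad_meas pc pb vb v k : measurable (Abad N xi U pc pb vb v k).
Proof.
have -> : Abad N xi U pc pb vb v k = \bigcup_(x : nat) \bigcup_(p : int * int)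
  ([set _ | (x <= Lscale k)%N /\ ((p.1 - x%:Z)%:~R < vel vb v k * (Lscale k)%:R)]
   `&` [set w | Ywalk N xi U pc pb w (x%:Z, 0%:Z) (Lscale k) = p]).
  apply/seteqP; split => w /=.
    by move=> [x [H1 H2]]; exists x => //; exists (Ywalk N xi U pc pb w (x%:Z, 0%:Z) (Lscale k)).
  by move=> [x _ [p _ /= [[H1 H2] H3]]]; exists x; split => //; rewrite H3.
apply: countable_bigcupT_measurable; first exact: countableP.
move=> x; apply: countable_bigcupT_measurable; first exact: countableP.
move=> p; apply: measurableI; first exact: meas_const.
exact: Y_level.
Qed.

End Meas.


Section Mem.
Variable T : Type.
Lemma bigI_mem (I : eqType) (r : seq I) (Pp : pred I) (F : I -> set T) w :
  (\big[setI/setT]_(i <- r | Pp i) F i) w <-> (forall i, i \in r -> Pp i -> F i w).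
Proof.
elim: r => [|i r IH]; first by rewrite big_nil; split.
rewrite big_cons; case: ifP => Pi; split.
- move=> [Fi /IH H] j; rewrite inE => /orP [/eqP ->|/H] //.
- by move=> H; split; [apply: H; rewrite ?inE ?eqxx|apply/IH => j jr; apply: H; rewrite inE jr orbT].
- move=> /IH H j; rewrite inE => /orP [/eqP -> |/H] //; by rewrite Pi.
- by move=> H; apply/IH => j jr; apply: H; rewrite inE jr orbT.
Qed.

Lemma bigU_mem (I : eqType) (r : seq I) (Pp : pred I) (F : I -> set T) w :
  (\big[setU/set0]_(i <- r | Pp i) F i) w <-> (exists i, [/\ i \in r, Pp i & F i w]).
Proof.
elim: r => [|i r IH]; first by rewrite big_nil; split => // -[i []]; rewrite in_nil.
rewrite big_cons; case: ifP => Pi; split.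
- move=> [Fi|/IH [j [jr Pj Fj]]]; first by exists i; rewrite inE eqxx.
  by exists j; rewrite inE jr orbT.
- move=> [j []]; rewrite inE => /orP [/eqP -> _ Fj|jr Pj Fj]; first by left.
  by right; apply/IH; exists j.
- by move=> /IH [j [jr Pj Fj]]; exists j; rewrite inE jr orbT.
- move=> [j []]; rewrite inE => /orP [/eqP -> |jr Pj Fj]; first by rewrite Pi.
  by apply/IH; exists j.
Qed.
End Mem.

Definition sg (b : bool) : int := if b then 1 else -1.

Definition pn (L : nat) (pi : {ffun 'I_L -> bool}) (j : nat) : bool :=
  if (insub j : option 'I_L) is Some o then pi o else false.

Lemma pnE L (pi : {ffun 'I_L -> bool}) (o : 'I_L) : pn pi o = pi o.
Proof. by rewrite /pn valK. Qed.

Definition psum L (pi : {ffun 'I_L -> bool}) (i : nat) : int := \sum_(j < i) sg (pn pi j).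

Definition site L (pi : {ffun 'I_L -> bool}) (x : int) (i : nat) : int * int :=
  (x + psum pi i, Posz i).

Lemma psumS L (pi : {ffun 'I_L -> bool}) i : psum pi i.+1 = psum pi i + sg (pn pi i).
Proof. by rewrite /psum big_ord_recr. Qed.

Lemma psum_bound L (pi : {ffun 'I_L -> bool}) i : - (i%:Z) <= psum pi i <= i%:Z.
Proof.
elim: i => [|i IH]; first by rewrite /psum big_ord0.
rewrite /psum big_ord_recr /= -/(psum pi i); move: IH.
by case: (pn pi i) => /= /andP [H1 H2]; apply/andP; split; lia.
Qed.

Section Incl.
Variable R : realType.
Context {d : measure_display} {Omega : measurableType d}.
Variables (N : int -> Omega -> nat) (xi : int -> nat -> int -> Omega -> int)
          (U : int * int -> Omega -> R).
Variables (pc pb : R).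

Definition EU (z : int * int) := [set w | U z w <= pb].

Definition Fev L (pi : {ffun 'I_L -> bool}) x :=
  \big[setI/setT]_(i < L) (if pi i then EU (site pi x i) else ~` EU (site pi x i)).

Definition Cev L a j := \big[setI/setT]_(m <- iota 0 L) [set w | xi a j (Posz m) w = 0].
Definition Dev L M a := \big[setI/setT]_(j <- iota 0 M) ~` Cev L a j.
Definition Nlow M a := \big[setU/set0]_(n < M) [set w | N a w = n].
Definition Bad L M :=
  \big[setU/set0]_(i < (3 * L).+1) (Nlow M (i%:Z - L%:Z) `|` Dev L M (i%:Z - L%:Z)).
Definition Walkbad L (vs : R) :=
  \big[setU/set0]_(x < L.+1) \big[setU/set0]_(pi : {ffun 'I_L -> bool} |
     (psum pi L)%:~R < vs * L%:R) Fev pi (Posz x).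

Lemma YS w y i : Ywalk N xi U pc pb w y i.+1 =
  (if stepRight N xi U pc pb w (Ywalk N xi U pc pb w y i)
   then ((Ywalk N xi U pc pb w y i).1 + 1, (Ywalk N xi U pc pb w y i).2 + 1)
   else ((Ywalk N xi U pc pb w y i).1 - 1, (Ywalk N xi U pc pb w y i).2 + 1)).
Proof. by []. Qed.

Lemma good_inT L M a w : ~ (Nlow M a `|` Dev L M a) w ->
  forall n, (n <= L)%N -> inT N xi w (a, Posz n).
Proof.
move=> H n nL.
have HN : (M <= N a w)%N.
  rewrite leqNgt; apply/negP => Hlt; apply: H; left.
  by apply/bigU_mem; exists (Ordinal Hlt); rewrite mem_index_enum.
have [j [jM Cj]] : exists j, (j < M)%N /\ Cev L a j w.
  apply: contrapT => Hn; apply: H; right; apply/bigI_mem => j.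
  rewrite mem_iota add0n => jM _ Cj; apply: Hn; exists j; split => //.
exists a, j; split; first exact: leq_trans jM HN.
rewrite /= big1 ?addr0 // => i _.
move/bigI_mem: Cj; apply => //.
by rewrite mem_iota add0n (leq_trans (ltn_ord i) nL).
Qed.

Lemma incl k L M vs v vb : Lscale k = L ->
  vel vb v k <= vs ->
  Abad N xi U pc pb vb v k `<=` Bad L M `|` Walkbad L vs.
Proof.
move=> eL Hvs w [x [xL Hw]]; rewrite eL in xL Hw.
case: (pselect (Bad L M w)) => HB; [by left|right].
have Hgood : forall a n, - L%:Z <= a - x%:Z -> a - x%:Z <= L%:Z -> (n <= L)%N ->
    inT N xi w (a, Posz n).
  move=> a n H1 H2 nL; apply: (@good_inT L M) => // Ha; apply: HB.
  have Hi : (absz (a + L%:Z)%R < (3 * L).+1)%N.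
    rewrite ltnS; lia.
  apply/bigU_mem; exists (Ordinal Hi); split; rewrite ?mem_index_enum //=.
  have -> : (absz (a + L%:Z))%:Z - L%:Z = a by lia.
  exact: Ha.
pose pi := [ffun i : 'I_L => U (Ywalk N xi U pc pb w (x%:Z, 0%:Z) i) w <= pb].
have HY : forall i, (i <= L)%N -> Ywalk N xi U pc pb w (x%:Z, 0%:Z) i = site pi x%:Z i.
  elim => [|i IH] iL; first by rewrite /site /psum big_ord0 addr0.
  have iL' : (i < L)%N := iL.
  rewrite YS IH; last exact: ltnW.
  have HT : inT N xi w (site pi x%:Z i).
    have := psum_bound pi i; rewrite /site => /andP [H1 H2].
    apply: Hgood; [lia|lia|exact: ltnW].
  have -> : stepRight N xi U pc pb w (site pi x%:Z i) = pn pi i.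
    rewrite /stepRight (asboolT HT) (_ : forall a b : bool, (true && a) || (~~ true && b) = a);
      last by case.
    rewrite -(IH (ltnW iL)) -[i]/(nat_of_ord (Ordinal iL')) pnE ffunE.
    reflexivity.
  rewrite /site psumS.
  case: (pn pi i); rewrite /sg; congr pair => /=; lia.
have xL' : (x < L.+1)%N := xL.
apply/bigU_mem; exists (Ordinal xL'); split; rewrite ?mem_index_enum //.
apply/bigU_mem; exists pi; split; rewrite ?mem_index_enum //.
  have E1 : (Ywalk N xi U pc pb w (x%:Z, 0%:Z) L).1 - x%:Z = psum pi L.
    rewrite HY //; change ((x%:Z + psum pi L) - x%:Z = psum pi L); ring.
  rewrite E1 in Hw; apply: (lt_le_trans Hw); apply: ler_wpM2r; [exact: ler0n|exact: Hvs].
apply/bigI_mem => i _ _.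
have Hi := HY i (ltnW (ltn_ord i)).
change ((if pi i then EU (site pi x%:Z i) else ~` EU (site pi x%:Z i)) w).
rewrite ffunE Hi; case: ifP => H; first exact: H.
by move=> H'; move: H; rewrite H'.
Qed.

End Incl.


Lemma prod_const_seq (R : comRingType) (I : Type) (r : seq I) (c : R) :
  \prod_(i <- r) c = c ^+ size r.
Proof. by elim: r => [|i r IH]; rewrite ?big_nil ?expr0 // big_cons IH exprS. Qed.

Section Bounds.
Variable R : realType.
Context {d : measure_display} {Omega : measurableType d}.
Variable P : probability Omega R.
Variables (N : int -> Omega -> nat) (xi : int -> nat -> int -> Omega -> int)
          (U : int * int -> Omega -> R).
Variables (q rho pc pb : R).
Hypothesis HM : PPP_model N xi U P q rho.
Hypothesis Hpb : 0 <= pb <= 1.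

Definition Egen (i : src) : set Omega :=
  match i with
  | inl (inl x) => [set w | N x w = 0%N]
  | inl (inr (x, j, m)) => [set w | xi x j m w = 0]
  | inr y => [set w | U y w <= pb]
  end.

Lemma HE i : gen_events N xi U i (Egen i).
Proof. by case: i => [[x|[[x j] m]]|y] /=; eexists. Qed.

Lemma Hmeas : forall i E, gen_events N xi U i E -> measurable E.
Proof. by case: HM. Qed.

Lemma pr_Nlow M a :
  pr P (Nlow N M a) <= \sum_(n < M) expR (- rho) * rho ^+ n / (n`!)%:R.
Proof.
apply: le_trans (pr_bigU P _ _) _; first by move=> n _; exact: meas_N Hmeas _ _.
apply: ler_sum => n _; case: HM => _ HN _ _ _.
by rewrite /pr HN.
Qed.

Definition Jb L (a : int) (j : nat) : seq src :=
  [seq inl (inr (a, j, Posz m)) | m <- iota 0 L].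

Lemma pr_Dev L M a : pr P (Dev xi L M a) = (1 - q ^+ L) ^+ M.
Proof.
have -> : Dev xi L M a = cyl Egen [::] `&`
   \big[setI/setT]_(b <- [seq (Jb L a j, false) | j <- iota 0 M])
      (if b.2 then cyl Egen b.1 else ~` cyl Egen b.1).
  rewrite /cyl big_nil setTI big_map /Dev; apply: eq_bigr => j _ /=.
  by rewrite /Cev /Jb big_map.
rewrite (blocks HM HE) //; last first.
  rewrite /= -map_comp /=.
  have -> : flatten [seq Jb L a j | j <- iota 0 M] =
    [seq inl (inr (a, j, Posz m)) : src | j <- iota 0 M, m <- iota 0 L] by [].
  apply: allpairs_uniq; rewrite ?iota_uniq //.
  by move=> [j1 m1] [j2 m2] _ _ /= [-> ->].
rewrite /cyl big_nil.
have -> : pr P setT = 1 by rewrite /pr probability_setT.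
rewrite mul1r big_map -[in RHS](size_iota 0 M) -prod_const_seq.
apply: eq_bigr => j _ /=; congr (_ - _).
rewrite -/(cyl Egen (Jb L a j)) (cylP HM HE); last first.
  by rewrite map_inj_uniq ?iota_uniq // => m1 m2 [].
rewrite big_map -[in RHS](size_iota 0 L) -prod_const_seq.
apply: eq_bigr => m _; case: HM => _ _ Hxi _ _.
by case: (Hxi a j (Posz m)) => _ H0 _; rewrite /pr /= H0.
Qed.

Lemma pr_Fev L (pi : {ffun 'I_L -> bool}) x :
  pr P (Fev U pb pi x) = \prod_(i < L) (if pi i then pb else 1 - pb).
Proof.
have -> : Fev U pb pi x = cyl Egen [::] `&`
   \big[setI/setT]_(b <- [seq ([:: inr (site pi x i)] : seq src, pi i) | i : 'I_L <- index_enum 'I_L])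
      (if b.2 then cyl Egen b.1 else ~` cyl Egen b.1).
  rewrite /cyl big_nil setTI big_map /Fev; apply: eq_bigr => i _ /=.
  by rewrite big_cons big_nil setIT.
rewrite (blocks HM HE) //; last first.
  rewrite /= -map_comp /=.
  rewrite (_ : [seq [:: inr (site pi x i)] | i : 'I_L <- index_enum 'I_L] =
     [seq [:: y] | y <- [seq inr (site pi x i) : src | i : 'I_L <- index_enum 'I_L]]); last first.
    by rewrite -map_comp.
  rewrite flatten_seq1 map_inj_uniq ?index_enum_uniq //.
  by move=> i1 i2 [] _ [] /ord_inj.
rewrite /cyl big_nil.
have -> : pr P setT = 1 by rewrite /pr probability_setT.
rewrite mul1r big_map; apply: eq_bigr => i _ /=.
rewrite big_cons big_nil setIT /=.
have -> : pr P [set w | U (site pi x i) w <= pb] = pb.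
  by case: HM => _ _ _ HU _; rewrite /pr HU.
by case: (pi i).
Qed.

End Bounds.


Section Chernoff.
Variable R : realType.

Lemma intr_sumL L (f : 'I_L -> int) :
  ((\sum_(i < L) f i)%:~R : R) = \sum_(i < L) (f i)%:~R.
Proof. by apply: big_morph => [x y|]; rewrite ?intrD. Qed.

Lemma psum_ord L (pi : {ffun 'I_L -> bool}) : psum pi L = \sum_(i < L) sg (pi i).
Proof. by rewrite /psum; apply: eq_bigr => i _; rewrite pnE. Qed.

Definition wt (pb : R) (b : bool) : R := if b then pb else 1 - pb.

Lemma chernoff (pb s vs : R) L : 0 <= pb <= 1 -> 0 <= s ->
  \sum_(pi : {ffun 'I_L -> bool} | (psum pi L)%:~R < vs * L%:R) \prod_(i < L) wt pb (pi i)
  <= (expR (s * vs) * (pb * expR (- s) + (1 - pb) * expR s)) ^+ L.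
Proof.
move=> /andP [pb0 pb1] s0.
have wt0 : forall b, 0 <= wt pb b by case; rewrite /wt ?subr_ge0.
apply: (@le_trans _ _ (\sum_(pi : {ffun 'I_L -> bool})
   \prod_(i < L) (wt pb (pi i) * expR (s * vs - s * (sg (pi i))%:~R)))).
  rewrite [leRHS](bigID (fun pi : {ffun 'I_L -> bool} => (psum pi L)%:~R < vs * L%:R)) /=.
  rewrite -[leLHS]addr0; apply: lerD; last by apply: sumr_ge0 => pi _; apply: prodr_ge0 => i _;
    apply: mulr_ge0 => //; exact: expR_ge0.
  apply: ler_sum => pi Hpi.
  rewrite big_split /= -expR_sum; apply: ler_peMr; first exact: prodr_ge0.
  rewrite -[leLHS]expR0 ler_expR sumrB -mulr_sumr -[X in _ - X]mulr_sumr -intr_sumL -psum_ord.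
  rewrite sumr_const card_ord -mulr_natr -mulrBr.
  by apply: mulr_ge0 => //; rewrite subr_ge0 ltW.
rewrite -(bigA_distr_bigA (fun (i : 'I_L) (b : bool) => wt pb b * expR (s * vs - s * (sg b)%:~R))).
rewrite prodr_const card_ord; apply: lerXn2r.
- by apply: sumr_ge0 => b _; apply: mulr_ge0 => //; exact: expR_ge0.
- by apply: mulr_ge0; [exact: expR_ge0| apply: addr_ge0; apply: mulr_ge0; rewrite ?subr_ge0 ?expR_ge0].
rewrite big_bool /wt /sg /= mulrDr !expRD.
rewrite (_ : (1%:~R : R) = 1) // (_ : ((-1)%:~R : R) = -1) // mulr1 mulrN1 opprK.
by rewrite le_eqVlt; apply/orP; left; apply/eqP; ring.
Qed.

End Chernoff.


Section Cb.
Variable R : realType.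

Lemma expR_le2 (t : R) : t <= 1/2 -> expR t <= 1 + t + 2 * t ^+ 2.
Proof.
move=> ht.
have h1 := expR_ge1Dx (- t).
have h2 : expR t * expR (- t) = 1 by rewrite -expRD subrr expR0.
have e0 := expR_ge0 t.
have h3 : expR t * (1 - t) <= 1.
  by rewrite -[X in _ <= X]h2; apply: ler_wpM2l.
nra.
Qed.

Lemma cbound (pb dl : R) : 0 <= pb <= 1 -> 0 < dl ->
  expR (dl / (4 * (2 + dl) ^+ 2) * (2 * pb - 1 - dl)) *
   (pb * expR (- (dl / (4 * (2 + dl) ^+ 2))) + (1 - pb) * expR (dl / (4 * (2 + dl) ^+ 2)))
  <= 1 - dl / (4 * (2 + dl) ^+ 2) * dl / 2.
Proof.
move=> /andP [pb0 pb1] dl0.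
set s := dl / (4 * (2 + dl) ^+ 2).
have u0 : 0 < 4 * (2 + dl) ^+ 2 by apply: mulr_gt0 => //; apply: exprn_gt0; lra.
have hs : s * (4 * (2 + dl) ^+ 2) = dl by rewrite /s mulfVK // gt_eqF.
have s0 : 0 < s by apply: divr_gt0.
have hsu : s * (2 + dl) <= 1/4.
  have : s * (2 + dl) * (4 * (2 + dl)) = dl.
    by rewrite -[in RHS]hs; ring.
  move=> H; nra.
have -> : expR (s * (2 * pb - 1 - dl)) * (pb * expR (- s) + (1 - pb) * expR s)
  = pb * expR (s * (2 * pb - 2 - dl)) + (1 - pb) * expR (s * (2 * pb - dl)).
  rewrite mulrDr (mulrCA (expR _) pb) (mulrCA (expR _) (1 - pb)) -!expRD.
  by congr (_ * expR _ + _ * expR _); ring.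
set t1 := s * (2 * pb - 2 - dl); set t2 := s * (2 * pb - dl).
have ht1 : t1 = s * (2 * pb - 2 - dl) by [].
have ht2 : t2 = s * (2 * pb - dl) by [].
have e1 : expR t1 <= 1 + t1 + 2 * t1 ^+ 2 by apply: expR_le2; rewrite ht1; nra.
have e2 : expR t2 <= 1 + t2 + 2 * t2 ^+ 2 by apply: expR_le2; rewrite ht2; nra.
have q1 : t1 ^+ 2 <= s ^+ 2 * (2 + dl) ^+ 2.
  by rewrite ht1 exprMn; apply: ler_wpM2l; [exact: sqr_ge0 | nra].
have q2 : t2 ^+ 2 <= s ^+ 2 * (2 + dl) ^+ 2.
  by rewrite ht2 exprMn; apply: ler_wpM2l; [exact: sqr_ge0 | nra].
have k2 : 2 * (s ^+ 2 * (2 + dl) ^+ 2) = s * dl / 2.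
  by rewrite -[in RHS]hs; field.
nra.
Qed.

End Cb.


Lemma Lscale_ge k : (k + 100 <= Lscale k)%N.
Proof.
elim: k => [|k IH] //=.
have h10 : (10 <= Nat.sqrt (Lscale k))%N.
  apply/ssrnat.leP; rewrite -[10%N]/(Nat.sqrt 100); apply: Nat.sqrt_le_mono; apply/ssrnat.leP.
  exact: leq_trans (leq_addl _ _) IH.
have : (10 * Lscale k <= Nat.sqrt (Lscale k) * Lscale k)%N by rewrite leq_mul2r h10 orbT.
lia.
Qed.

Section NumS.
Variable R : realType.

Lemma exists_nat_gt (x : R) : exists K : nat, x < K%:R.
Proof.
case: (lerP x 0) => hx; first by exists 1%N; rewrite (le_lt_trans hx) ?ltr01.
by exists (Num.bound x); apply: archi_boundP; exact: ltW.
Qed.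

Lemma rho_seq_ge (rho0 : R) k : 1 <= rho0 -> rho0 <= rho_seq rho0 k.
Proof.
move=> h1; elim: k => [|k IH] //=.
rewrite -[leLHS]mul1r; apply: ler_pM => //; first lra.
by rewrite lerDl powR_ge0.
Qed.

Lemma vel_le (vb v : R) k : 0 < delta vb v -> (0 < k)%N -> vel vb v k <= vb - delta vb v.
Proof.
move=> d0; elim: k => [|k IH] // _.
case: k IH => [|k] IH; first by [].
have H := IH isT.
have -> : vel vb v k.+2 = vel vb v k.+1 - delta vb v * (6 / pi ^+ 2) / (k.+1%:R ^+ 2) by [].
apply: le_trans _ H; rewrite lerBlDr lerDl.
apply: divr_ge0; last exact: sqr_ge0.
apply: mulr_ge0; first exact: ltW.
by apply: divr_ge0 => //; exact: sqr_ge0.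
Qed.

Lemma pois_bound (rho : R) (M n : nat) : 1 <= rho -> (n < M)%N ->
  expR (- rho) * rho ^+ n / (n`!)%:R <= (M.+1`!)%:R / rho.
Proof.
move=> r1 nM.
have r0 : 0 < rho by lra.
have f0 : 0 < (M.+1`!)%:R :> R by rewrite ltr0n fact_gt0.
have e1 := expR_ge1Dxn M (ltW r0).
have hE : rho ^+ M.+1 / (M.+1`!)%:R <= expR rho.
  by apply: le_trans e1; rewrite lerDr.
have hn : rho ^+ n <= rho ^+ M by apply: ler_weXn2l => //; exact: ltnW.
have hf : 1 <= (n`!)%:R :> R by rewrite ler1n fact_gt0.
have ep := expR_gt0 rho.
rewrite expRN.
have fn0 : 0 < (n`!)%:R :> R by rewrite ltr0n fact_gt0.
have ei : 0 <= (expR rho)^-1 by rewrite invr_ge0 ltW.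
apply: (@le_trans _ _ ((expR rho)^-1 * rho ^+ n)).
  rewrite ler_pdivrMr // ler_peMr //; apply: mulr_ge0 => //; exact: exprn_ge0 (ltW r0).
apply: (@le_trans _ _ ((expR rho)^-1 * rho ^+ M)); first exact: ler_wpM2l.
have hX : rho ^+ M * rho / (M.+1`!)%:R <= expR rho by rewrite -exprSr.
rewrite (_ : (expR rho)^-1 * rho ^+ M =
   (rho ^+ M * rho / (M.+1`!)%:R) / expR rho * ((M.+1`!)%:R / rho)); last first.
  by field; rewrite !gt_eqF.
rewrite -[leRHS]mul1r; apply: ler_wpM2r; first by apply: divr_ge0; apply: ltW.
by rewrite ler_pdivrMr // mul1r.
Qed.

End NumS.


Section Asym.
Variable R : realType.

Lemma expRN_le (y : R) (c : R) : 0 < c -> c <= expR y -> expR (- y) <= c^-1.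
Proof.
move=> c0 h; rewrite expRN; rewrite lef_pV2 ?posrE ?expR_gt0 //.
Qed.

Lemma asym (eta : R) : 0 < eta -> exists K : nat, forall k, (K <= k)%N ->
  ((Lscale k)%:R + 1) * expR (- (eta * (Lscale k)%:R)) <=
  expR (- powR (ln (Lscale k)%:R) (3/2)) / 4.
Proof.
move=> e0.
set m0 := 1 + 216 / eta.
have [K HK] := exists_nat_gt (expR m0).
exists K => k Kk.
have LK : (K <= Lscale k)%N.
  by apply: leq_trans Kk _; apply: leq_trans (Lscale_ge k); exact: leq_addr.
move: (Lscale k) LK => Ln LK.
set L : R := Ln%:R.
have hKL : expR m0 < L by apply: lt_le_trans HK _; rewrite ler_nat.
have L0 : 0 < L by apply: lt_trans hKL; exact: expR_gt0.
set m := ln L.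
have Lm : expR m = L by rewrite /m lnK // posrE.
have mm0 : m0 <= m.
  rewrite /m -[leLHS](expRK m0) ler_ln ?posrE ?expR_gt0 //; exact: ltW.
have h216 : eta * (216 / eta) = 216 by field; rewrite gt_eqF.
have d0 : 0 < 216 / eta by apply: divr_gt0.
have m1 : 1 <= m by rewrite /m0 in mm0; lra.
have em : 216 <= eta * m.
  have : eta * m0 <= eta * m by rewrite ler_pM2l.
  by rewrite /m0 mulrDr mulr1 h216; lra.
have m00 : 0 <= m by lra.
have pw : powR m (3/2) <= m ^+ 2.
  rewrite -powR_mulrn //; apply: ler_powR => //; lra.
have L4 : m ^+ 4 / 24 <= L.
  have := expR_ge1Dxn 3 m00; rewrite Lm (_ : (3.+1`!)%N = 24%N) //.
  by lra.
have hL : eta * (m ^+ 4 / 24) <= eta * L by rewrite ler_pM2l.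
have m2 : m <= m ^+ 2 by nra.
have m3 : m ^+ 2 <= m ^+ 3 by rewrite exprS; nra.
have e4 : 216 * m ^+ 3 <= eta * m ^+ 4.
  by rewrite (exprS m 3) mulrA; apply: ler_wpM2r; [exact: exprn_ge0 | exact: em].
have key : 7 <= eta * L - m - m ^+ 2 by nra.
have eq1 : expR (- (eta * L)) * L = expR (- m ^+ 2) * expR (- (eta * L - m - m ^+ 2)).
  by rewrite -Lm -!expRD; congr expR; ring.
have h8 : expR (- (eta * L - m - m ^+ 2)) <= 8^-1.
  apply: expRN_le => //; apply: le_trans (expR_ge1Dx _); lra.
have eT : expR (- m ^+ 2) <= expR (- powR m (3/2)) by rewrite ler_expR; lra.
have eP := expR_gt0 (- m ^+ 2).
have eQ := expR_gt0 (- (eta * L)).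
apply: (@le_trans _ _ (2 * (expR (- (eta * L)) * L))).
  have L1 : 1 <= L by have := expR_ge1Dx m0; rewrite /m0 in hKL *; lra.
  nra.
rewrite eq1.
apply: (@le_trans _ _ (2 * (expR (- m ^+ 2) * 8^-1))).
  by apply: ler_wpM2l => //; apply: ler_wpM2l => //; lra.
lra.
Qed.

Lemma chooseM (L : nat) (T q : R) : 0 < T -> 0 < q < 1 ->
  exists M : nat, ((3 * L).+1)%:R * (1 - q ^+ L) ^+ M <= T / 8.
Proof.
move=> T0 /andP [q0 q1].
set a := q ^+ L.
have a0 : 0 < a by apply: exprn_gt0.
have a1 : a <= 1 by apply: exprn_ile1; lra.
set c : R := ((3 * L).+1)%:R.
have c0 : 0 < c by rewrite ltr0n.
have [M HM] := exists_nat_gt (8 * c / (T * a)).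
exists M.
have hM : 8 * c <= T * a * M%:R.
  have := HM; rewrite ltr_pdivrMr; last exact: mulr_gt0.
  by move/ltW; rewrite [M%:R * _]mulrC.
have h1 : (1 - a) ^+ M <= expR (- (a * M%:R)).
  rewrite -mulNr mulrC expRM_natl; apply: lerXn2r; rewrite ?nnegrE ?expR_ge0 //; first lra.
  exact: expR_ge1Dx.
have h2 : expR (- (a * M%:R)) <= (1 + a * M%:R)^-1.
  apply: expRN_le; last exact: expR_ge1Dx.
  by apply: ltr_pwDl => //; apply: mulr_ge0 => //; lra.
have aM0 : 0 <= a * M%:R by apply: mulr_ge0 => //; lra.
have h3 : c * (1 + a * M%:R)^-1 <= T / 8.
  rewrite -[leLHS]/(c / (1 + a * M%:R)) ler_pdivrMr; last by lra.
  rewrite (_ : T / 8 * (1 + a * M%:R) = T / 8 + (T * a * M%:R) / 8); last by field.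
  lra.
apply: le_trans h3; apply: ler_wpM2l; first lra.
exact: le_trans h1 h2.
Qed.

End Asym.


Section MeasSets.
Variable R : realType.
Context {d : measure_display} {Omega : measurableType d}.
Variables (N : int -> Omega -> nat) (xi : int -> nat -> int -> Omega -> int)
          (U : int * int -> Omega -> R).
Hypothesis Hm : forall i E, gen_events N xi U i E -> measurable E.

Lemma meas_Nlow M a : measurable (Nlow N M a).
Proof. by apply: bigsetU_measurable => n _; exact: meas_N Hm _ _. Qed.

Lemma meas_Dev L M a : measurable (Dev xi L M a).
Proof.
apply: bigsetI_measurable => j _; apply: measurableC.
by apply: bigsetI_measurable => m _; exact: (meas_xi Hm a j (Posz m) 0).
Qed.

Lemma meas_Bad L M : measurable (Bad N xi L M).
Proof.
apply: bigsetU_measurable => i _; apply: measurableU; [exact: meas_Nlow|exact: meas_Dev].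
Qed.

Lemma meas_Fev pb L (pi : {ffun 'I_L -> bool}) x : measurable (Fev U pb pi x).
Proof.
apply: bigsetI_measurable => i _; case: (pi i); first exact: meas_U Hm _ _.
exact/measurableC/(meas_U Hm).
Qed.

Lemma meas_Walkbad pb L vs : measurable (Walkbad U pb L vs).
Proof.
apply: bigsetU_measurable => x _; apply: bigsetU_measurable => pi _.
exact: meas_Fev.
Qed.

End MeasSets.

Theorem lemma3p4 (R : realType) (q pc pb v : R) :
  0 < q < 1 -> 0 <= pc <= 1 -> 0 <= pb <= 1 ->
  (2 * pc - 1 < 2 * pb - 1) -> v < 2 * pb - 1 ->
  forall k' : nat, exists (k2 : nat) (rho0 : R),
    [/\ (k' <= k2)%N, (0 < k2)%N, 1 <= rho0 &
      forall (d : measure_display) (Omega : measurableType d)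
             (P : probability Omega R)
             (N : int -> Omega -> nat) (xi : int -> nat -> int -> Omega -> int)
             (U : int * int -> Omega -> R),
        PPP_model N xi U P q (rho_seq rho0 k2) ->
        (P (Abad N xi U pc pb (2 * pb - 1) v k2) <
           (expR (- powR (ln (Lscale k2)%:R) (3 / 2)))%:E)%E].
Proof.
move=> hq hpc hpb hcb hv k'.
have dl0 : 0 < delta (2 * pb - 1) v by rewrite /delta; lra.
have [dl edl] : exists dl, delta (2 * pb - 1) v = dl by eexists.
rewrite edl in dl0.
set s := dl / (4 * (2 + dl) ^+ 2).
have s0 : 0 < s by apply: divr_gt0 => //; apply: mulr_gt0 => //; apply: exprn_gt0; lra.
set vs := 2 * pb - 1 - dl.
set eta := s * dl / 2.
have eta0 : 0 < eta by rewrite /eta; apply: divr_gt0 => //; exact: mulr_gt0.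
set c := expR (s * vs) * (pb * expR (- s) + (1 - pb) * expR s).
have hc : c <= 1 - eta by exact: (cbound hpb dl0).
have c0 : 0 <= c.
  apply: mulr_ge0; first exact: expR_ge0.
  apply: addr_ge0; apply: mulr_ge0; rewrite ?expR_ge0 //; case/andP: hpb => *; lra.
have [K HK] := asym eta0.
set k2 := maxn (maxn k' 1) K.
have Kk2 : (K <= k2)%N by rewrite leq_maxr.
have HK2 := HK k2 Kk2.
exists k2.
have [L eL] : exists L, Lscale k2 = L by eexists.
rewrite eL in HK2 *.
set T := expR (- powR (ln L%:R) (3 / 2)).
have T0 : 0 < T by exact: expR_gt0.
have [M HMb] := chooseM L T0 hq.
set F : R := (M.+1`!)%:R.
have F0 : 0 < F by rewrite ltr0n fact_gt0.
set B : R := ((3 * L).+1)%:R.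
have B0 : 0 < B by rewrite ltr0n.
set rho0 := 1 + 8 * B * (M%:R * F) / T.
have X0 : 0 <= 8 * B * (M%:R * F) / T.
  apply: divr_ge0; last exact: ltW.
  by apply: mulr_ge0; [apply: mulr_ge0; lra| apply: mulr_ge0; [exact: ler0n| exact: ltW]].
have r0a : 1 <= rho0 by rewrite /rho0; lra.
have r0b : 8 * B * (M%:R * F) / T <= rho0 by rewrite /rho0; lra.
exists rho0; split.
- by rewrite /k2 (leq_trans (leq_maxl k' 1)) // leq_maxl.
- by rewrite /k2 (leq_trans (leq_maxr k' 1)) // leq_maxl.
- exact: r0a.
move=> d Omega P N xi U HM.
set rho := rho_seq rho0 k2.
have rho1 : rho0 <= rho by apply: rho_seq_ge.
have rho_1 : 1 <= rho := le_trans r0a rho1.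
have r0 : 0 < rho by lra.
have Hm : forall i E, gen_events N xi U i E -> measurable E by case: HM.
rewrite (prE P (Abad_meas Hm _ _ _ _ _)) lte_fin.
have Hvel : vel (2 * pb - 1) v k2 <= vs.
  rewrite /vs -edl; apply: vel_le; first by rewrite edl.
  by rewrite /k2 (leq_trans _ (leq_maxl _ _)) // leq_maxr.
have Hincl := incl (N:=N) (xi:=xi) (U:=U) (pc:=pc) (pb:=pb) M eL Hvel.
apply: (@le_lt_trans _ _ (pr P (Bad N xi L M) + pr P (Walkbad U pb L vs))).
  apply: le_trans (pr_U P (meas_Bad Hm L M) (meas_Walkbad Hm pb L vs)).
  apply: pr_le; [exact: Abad_meas Hm _ _ _ _ _
    | apply: measurableU; [exact: meas_Bad Hm _ _ | exact: meas_Walkbad Hm _ _ _]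
    | exact: Hincl].
have hB : pr P (Bad N xi L M) <= T / 4.
  apply: le_trans (pr_bigU P _ _) _.
    by move=> i _; apply: measurableU; [exact: meas_Nlow Hm _ _ | exact: meas_Dev Hm _ _ _].
  apply: (@le_trans _ _ (\sum_(i < (3 * L).+1) (M%:R * (F / rho) + (1 - q ^+ L) ^+ M))).
    apply: ler_sum => i _.
    apply: le_trans (pr_U P (meas_Nlow Hm _ _) (meas_Dev Hm _ _ _)) _.
    rewrite (pr_Dev pb HM); apply: lerD => //.
    apply: le_trans (pr_Nlow HM _ _) _.
    apply: (@le_trans _ _ (\sum_(n < M) (F / rho))); last first.
      by rewrite sumr_const card_ord mulr_natl.
    apply: ler_sum => n _; apply: pois_bound; first exact: rho_1.
    exact: ltn_ord.
  rewrite sumr_const card_ord -[_ *+ (3 * L).+1]mulr_natl -/B mulrDr.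
  have h1 : B * (M%:R * (F / rho)) <= T / 8.
    have H : 8 * B * (M%:R * F) <= rho * T.
      by have := le_trans r0b rho1; rewrite ler_pdivrMr.
    rewrite (_ : B * (M%:R * (F / rho)) = (8 * B * (M%:R * F)) / rho / 8); last first.
      by field; rewrite gt_eqF.
    apply: (@le_trans _ _ (rho * T / rho / 8)); last first.
      by rewrite le_eqVlt; apply/orP; left; apply/eqP; field; rewrite gt_eqF.
    apply: ler_wpM2r; first lra.
    by apply: ler_wpM2r => //; rewrite invr_ge0 ltW.
  lra.
have hW : pr P (Walkbad U pb L vs) <= T / 4.
  apply: le_trans (pr_bigU P _ _) _.
    by move=> x _; apply: bigsetU_measurable => pi _; exact: (meas_Fev Hm pb pi _).
  apply: (@le_trans _ _ (\sum_(x < L.+1) c ^+ L)).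
    apply: ler_sum => x _.
    apply: le_trans (pr_bigU P _ _) _; first by move=> pi _; exact: (meas_Fev Hm pb pi _).
    under eq_bigr do rewrite (pr_Fev HM hpb).
    exact: (chernoff vs L hpb (ltW s0)).
  rewrite sumr_const card_ord -[_ *+ L.+1]mulr_natl.
  apply: le_trans HK2.
  rewrite (_ : (L.+1)%:R = L%:R + 1 :> R); last by rewrite -addn1 natrD.
  apply: ler_wpM2l; first exact: addr_ge0.
  apply: (@le_trans _ _ ((1 - eta) ^+ L)).
    by apply: lerXn2r; rewrite ?nnegrE //; apply: le_trans hc.
  rewrite -[- (eta * L%:R)]mulNr [_ * L%:R]mulrC expRM_natl; apply: lerXn2r; rewrite ?nnegrE ?expR_ge0 //.
    by apply: le_trans hc.
  exact: expR_ge1Dx.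
lra.
Qed.
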